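(* In the setting where $\mu_0<\mu_1$, $\sigma_H>0$, $\pi,\lambda,p\in(0,1)$ are fixed and $s\in(\mu_0,\mu_1)$, let $A(s)=1-\Phi\big((s-\mu_1)/\sigma_H\big)$, $B(s)=1-\Phi\big((s-\mu_0)/\sigma_H\big)$, \[ e^*=\lambda(1,\pi;s)=\frac{\lambda\,[\pi A+(1-\pi)p]}{\pi\,[\lambda A+(1-\lambda)B]+(1-\pi)\,p},\qquad p_H=\frac{\lambda A}{\lambda A+(1-\lambda)B},\qquad p_L=\lambda, \] and \[ J^+=\log\frac{A}{\lambda A+(1-\lambda)B},\qquad J^-=\log\frac{1-e^*p_H}{1-e^*p_L}. \] Then, holding $(s,\pi,\lambda,p,\mu_0,\mu_1)$ fixed, $\partial_{\sigma_H}J^+<0$ and $\partial_{\sigma_H}J^->0$.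
   Context: Gaussian–quadratic benchmark: $s\mid(\theta,\omega)\sim\mathcal N(\mu_\omega,\sigma_\theta^2)$; the High type recommends risk iff her signal exceeds the cutoff $s$; the Low type recommends risk with signal-independent probability $p$; $p_\theta=\Pr(\omega=1\mid\theta,a=1)$; $e^*$ is the implementer's effort under quadratic cost; $J^+$ and $J^-$ are the log-likelihood-ratio jumps of the type posterior after success and failure following a risky recommendation. *)

(* Defs.v *)
From Stdlib Require Import Reals.
From Coquelicot Require Import Coquelicot.
Open Scope R_scope.

Definition phi_std (t : R) : R := exp (- t ^ 2 / 2) / sqrt (2 * PI).

Definition Phi (x : R) : R :=
  RInt_gen phi_std (Rbar_locally m_infty) (at_point x).

Definition Afun (mu1 sH s : R) : R := 1 - Phi ((s - mu1) / sH).
Definition Bfun (mu0 sH s : R) : R := 1 - Phi ((s - mu0) / sH).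

Definition estar (mu0 mu1 pi lam p s sH : R) : R :=
  let A := Afun mu1 sH s in let B := Bfun mu0 sH s in
  lam * (pi * A + (1 - pi) * p) /
  (pi * (lam * A + (1 - lam) * B) + (1 - pi) * p).

Definition pH (mu0 mu1 lam s sH : R) : R :=
  let A := Afun mu1 sH s in let B := Bfun mu0 sH s in
  lam * A / (lam * A + (1 - lam) * B).

Definition pL (lam : R) : R := lam.

Definition Jplus (mu0 mu1 lam s sH : R) : R :=
  let A := Afun mu1 sH s in let B := Bfun mu0 sH s in
  ln (A / (lam * A + (1 - lam) * B)).

Definition Jminus (mu0 mu1 pi lam p s sH : R) : R :=
  let e := estar mu0 mu1 pi lam p s sH in
  ln ((1 - e * pH mu0 mu1 lam s sH) / (1 - e * pL lam)).

(* Main.v *)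
Require Import Defs.
From Stdlib Require Import Reals Lra Classical.
From Coquelicot Require Import Coquelicot.
Open Scope R_scope.

Definition gg (t : R) := exp (- (t * t)).
Definition FF (x : R) := RInt gg 0 x.
Definition uu (x t : R) := exp (- (x * x * (1 + t * t))) / (1 + t * t).
Definition HH (x : R) := RInt (fun t => uu x t) 0 1.

Lemma pos1t t : 0 < 1 + t * t.
Proof. nra. Qed.

Lemma gg_cont t : continuous gg t.
Proof. apply (ex_derive_continuous (K:=R_AbsRing) (V:=R_NormedModule)). unfold gg. auto_derive. auto. Qed.

Lemma ex_RInt_gg a b : ex_RInt gg a b.
Proof. apply (ex_RInt_continuous (V:=R_CompleteNormedModule)). intros; apply gg_cont. Qed.

Lemma uu_der x t : is_derive (fun z => uu z t) x (-2 * x * exp (- (x * x * (1 + t * t)))).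
Proof.
  unfold uu. auto_derive. pose proof (pos1t t); lra.
  pose proof (pos1t t); field; lra.
Qed.

Lemma HH_der x : is_derive HH x (-2 * exp (- (x * x)) * FF x).
Proof.
  unfold HH.
  assert (E : -2 * exp (- (x * x)) * FF x =
              RInt (fun t => Derive (fun u => uu u t) x) 0 1).
  { symmetry. rewrite (RInt_ext _ (fun t => scal (-2 * exp (- (x * x))) (scal x (gg (x * t + 0))))).
    2:{ intros t _. erewrite is_derive_unique. 2: apply uu_der.
        unfold scal; simpl; unfold mult; simpl; unfold gg.
        replace (- (x * x * (1 + t * t))) with (- (x * x) + - ((x*t+0)*(x*t+0))) by ring.
        rewrite exp_plus. ring. }
    rewrite (RInt_scal (V:=R_CompleteNormedModule)).
    2:{ apply (ex_RInt_continuous (V:=R_CompleteNormedModule)). intros. apply (ex_derive_continuous (K:=R_AbsRing) (V:=R_NormedModule)).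
        unfold gg, scal; simpl; unfold mult; simpl. auto_derive. auto. }
    rewrite (RInt_comp_lin (V:=R_CompleteNormedModule)).
    2: apply ex_RInt_gg.
    unfold FF. rewrite Rmult_0_r, Rplus_0_r, Rmult_1_r, Rplus_0_r.
    unfold scal; simpl; unfold mult; simpl. ring. }
  rewrite E.
  apply (is_derive_RInt_param uu 0 1 x).
  - apply filter_forall. intros y t _. eexists. apply uu_der.
  - intros t _.
    apply continuity_2d_pt_ext with (f := fun u v => -2 * u * exp (- (u * u * (1 + v * v)))).
    { intros u v. symmetry. apply is_derive_unique, uu_der. }
    apply continuity_2d_pt_mult.
    + apply continuity_2d_pt_mult. apply continuity_2d_pt_const. apply continuity_2d_pt_id1.
    + apply continuity_1d_2d_pt_comp with (f := exp).
      * apply derivable_continuous_pt, derivable_pt_exp.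
      * apply continuity_2d_pt_opp. apply continuity_2d_pt_mult.
        apply continuity_2d_pt_mult; apply continuity_2d_pt_id1.
        apply continuity_2d_pt_plus. apply continuity_2d_pt_const.
        apply continuity_2d_pt_mult; apply continuity_2d_pt_id2.
  - apply filter_forall. intros y. apply (ex_RInt_continuous (V:=R_CompleteNormedModule)). intros z _.
    apply (ex_derive_continuous (K:=R_AbsRing) (V:=R_NormedModule)). unfold uu. auto_derive. pose proof (pos1t z); lra.
Qed.

Lemma FF_der x : is_derive FF x (gg x).
Proof.
  unfold FF. apply is_derive_RInt with (If := RInt gg 0) (a := 0).
  apply filter_forall. intros b. apply RInt_correct, ex_RInt_gg.
  apply gg_cont.
Qed.

Lemma HH0 : HH 0 = PI / 4.
Proof.
  unfold HH.
  rewrite (RInt_ext _ (fun t => / (1 + t²))).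
  2:{ intros t _. unfold uu. replace (- (0 * 0 * (1 + t * t))) with 0 by ring.
      rewrite exp_0. unfold Rsqr, Rdiv. apply Rmult_1_l. }
  apply is_RInt_unique.
  replace (PI / 4) with (minus (atan 1) (atan 0)).
  2:{ rewrite atan_1, atan_0. unfold minus, plus, opp; simpl. lra. }
  apply (is_RInt_derive (V:=R_CompleteNormedModule)). intros; apply is_derive_atan.
  intros; apply (ex_derive_continuous (K:=R_AbsRing) (V:=R_NormedModule)). auto_derive. unfold Rsqr. pose proof (pos1t x); lra.
Qed.

Lemma FF2H x : FF x * FF x + HH x = PI / 4.
Proof.
  rewrite <- HH0.
  assert (FF0 : FF 0 = 0). { unfold FF. rewrite RInt_point. reflexivity. }
  assert (D : forall y, is_derive (fun z => FF z * FF z + HH z) y zero).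
  { intros y.
    assert (D1 : is_derive (fun z => FF z * FF z) y (gg y * FF y + FF y * gg y)).
    { apply (is_derive_mult FF FF). apply FF_der. apply FF_der.
      intros; unfold mult; simpl; ring. }
    pose proof (is_derive_plus _ _ _ _ _ D1 (HH_der y)) as D2.
    unfold plus in D2; simpl in D2.
    replace (gg y * FF y + FF y * gg y + -2 * exp (- (y * y)) * FF y) with 0 in D2.
    exact D2. unfold gg. ring. }
  replace (HH 0) with (FF 0 * FF 0 + HH 0) by (rewrite FF0; ring).
  destruct (Rlt_or_le 0 x) as [Hx|Hx].
  - symmetry. apply (eq_is_derive (fun z => FF z * FF z + HH z) 0 x). intros; apply D. lra.
  - destruct (Req_dec x 0) as [->|Hx']. reflexivity.
    apply (eq_is_derive (fun z => FF z * FF z + HH z) x 0). intros; apply D. lra.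
Qed.

Lemma HH_pos x : 0 < HH x.
Proof.
  unfold HH. apply RInt_gt_0. lra.
  intros t _. unfold uu. apply Rdiv_lt_0_compat. apply exp_pos. apply pos1t.
  intros t _. apply (ex_derive_continuous (K:=R_AbsRing) (V:=R_NormedModule)). unfold uu. auto_derive. pose proof (pos1t t); lra.
Qed.

Lemma FF_bound x : FF x * FF x < PI / 4.
Proof. pose proof (FF2H x); pose proof (HH_pos x); lra. Qed.

Lemma sqrt2_pos : 0 < sqrt 2.
Proof. apply sqrt_lt_R0; lra. Qed.
Lemma sqrtPI_pos : 0 < sqrt PI.
Proof. apply sqrt_lt_R0; apply PI_RGT_0. Qed.

Lemma phi_cont t : continuous phi_std t.
Proof.
  apply (ex_derive_continuous (K:=R_AbsRing) (V:=R_NormedModule)).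
  unfold phi_std. auto_derive.
  assert (0 < sqrt (2 * PI)) by (apply sqrt_lt_R0; pose proof PI_RGT_0; lra). lra.
Qed.

Lemma ex_RInt_phi a b : ex_RInt phi_std a b.
Proof. apply (ex_RInt_continuous (V:=R_CompleteNormedModule)). intros; apply phi_cont. Qed.

Lemma phi_pos t : 0 < phi_std t.
Proof.
  unfold phi_std. apply Rdiv_lt_0_compat. apply exp_pos.
  apply sqrt_lt_R0; pose proof PI_RGT_0; lra.
Qed.

Lemma RInt_phi_gg a b :
  RInt phi_std a b = / sqrt PI * RInt gg (/ sqrt 2 * a + 0) (/ sqrt 2 * b + 0).
Proof.
  pose proof sqrt2_pos. pose proof sqrtPI_pos.
  rewrite (RInt_ext _ (fun t => scal (/ sqrt PI) (scal (/ sqrt 2) (gg (/ sqrt 2 * t + 0))))).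
  2:{ intros t _. unfold scal; simpl; unfold mult; simpl. unfold phi_std, gg.
      rewrite sqrt_mult_alt by lra.
      replace (- t ^ 2 / 2) with (- ((/ sqrt 2 * t + 0) * (/ sqrt 2 * t + 0))).
      field. split; lra.
      field_simplify. 2: lra. rewrite pow2_sqrt by lra. field. }
  rewrite (RInt_scal (V:=R_CompleteNormedModule)).
  2:{ apply (ex_RInt_continuous (V:=R_CompleteNormedModule)). intros. apply (ex_derive_continuous (K:=R_AbsRing) (V:=R_NormedModule)).
      unfold gg, scal; simpl; unfold mult; simpl. auto_derive. auto. }
  rewrite (RInt_comp_lin (V:=R_CompleteNormedModule)).
  2: apply ex_RInt_gg.
  reflexivity.
Qed.

Lemma FF_lt c : FF c < sqrt PI / 2.
Proof.
  pose proof (FF_bound c). pose proof sqrtPI_pos.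
  pose proof (sqrt_sqrt PI (Rlt_le _ _ PI_RGT_0)).
  nra.
Qed.

Lemma RInt_gg_0 a : RInt gg a 0 = FF (- a).
Proof.
  assert (E1 : RInt (fun y => scal (-1) (gg (-1 * y + 0))) 0 (- a) = RInt gg 0 a).
  { rewrite (RInt_comp_lin (V:=R_CompleteNormedModule)). 2: apply ex_RInt_gg.
    f_equal; simpl; ring. }
  assert (E2 : RInt (fun y => scal (-1) (gg (-1 * y + 0))) 0 (- a) = RInt (fun y => opp (gg y)) 0 (- a)).
  { apply RInt_ext. intros x _. unfold scal; simpl; unfold mult, opp; simpl. unfold gg.
    replace ((-1 * x + 0) * (-1 * x + 0)) with (x * x) by ring. ring. }
  rewrite (RInt_opp (V:=R_CompleteNormedModule)) in E2 by apply ex_RInt_gg.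
  rewrite <- (opp_RInt_swap (V:=R_CompleteNormedModule)) by apply ex_RInt_gg.
  rewrite <- E1, E2. unfold FF. simpl. unfold opp; simpl. ring.
Qed.

Lemma RInt_gg_lt a b : RInt gg a b < sqrt PI.
Proof.
  rewrite <- (RInt_Chasles (V:=R_CompleteNormedModule) gg a 0 b) by apply ex_RInt_gg.
  rewrite RInt_gg_0. pose proof (FF_lt (-a)). pose proof (FF_lt b).
  unfold FF in *. simpl. unfold plus; simpl. lra.
Qed.

Lemma RInt_phi_lt1 a b : RInt phi_std a b < 1.
Proof.
  rewrite RInt_phi_gg. pose proof (RInt_gg_lt (/ sqrt 2 * a + 0) (/ sqrt 2 * b + 0)).
  pose proof sqrtPI_pos.
  apply (Rmult_lt_compat_l (/ sqrt PI)) in H. rewrite Rinv_l in H. exact H. lra.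
  apply Rinv_0_lt_compat; lra.
Qed.

Lemma Chas a b c : RInt phi_std a b + RInt phi_std b c = RInt phi_std a c.
Proof. apply (RInt_Chasles (V:=R_CompleteNormedModule)); apply ex_RInt_phi. Qed.

Lemma RInt_phi_ge0 a b : a <= b -> 0 <= RInt phi_std a b.
Proof.
  intros. apply RInt_ge_0; auto. apply ex_RInt_phi. intros; left; apply phi_pos.
Qed.

Lemma RInt_phi_gt0 a b : a < b -> 0 < RInt phi_std a b.
Proof.
  intros. apply RInt_gt_0; auto. intros; apply phi_pos. intros; apply phi_cont.
Qed.

Lemma Phi_struct : exists l0, (forall y, Phi y = l0 + RInt phi_std 0 y) /\
                              (forall y, l0 + RInt phi_std 0 y < 1).
Proof.
  set (E := fun v => exists X, X <= 0 /\ v = RInt phi_std X 0).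
  assert (Eb : bound E).
  { exists 1. intros v [X [_ ->]]. left; apply RInt_phi_lt1. }
  assert (Ene : exists v, E v). { exists (RInt phi_std 0 0). exists 0. split; [lra|auto]. }
  destruct (completeness E Eb Ene) as [l0 [Hub Hlub]].
  assert (Mono : forall X Y, X <= Y -> RInt phi_std Y 0 <= RInt phi_std X 0).
  { intros X Y HXY. rewrite <- (Chas X Y 0). pose proof (RInt_phi_ge0 X Y HXY). lra. }
  exists l0. split.
  - intros y. unfold Phi. apply is_RInt_gen_unique.
    change (l0 + RInt phi_std 0 y) with (plus l0 (RInt phi_std 0 y)).
    apply (is_RInt_gen_Chasles (V:=R_NormedModule)) with (b := 0).
    + unfold is_RInt_gen, filterlimi, filter_le, filtermapi.
      intros P [eps HP].
      assert (HX0 : exists X0, X0 <= 0 /\ l0 - eps < RInt phi_std X0 0).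
      { apply NNPP. intro Hn.
        assert (l0 <= l0 - eps). { apply Hlub. intros v [X [HX ->]].
          apply Rnot_lt_le. intro Hl. apply Hn. exists X; auto. }
        destruct eps; simpl in *; lra. }
      destruct HX0 as [X0 [HX0 HX0']].
      apply Filter_prod with (Q := fun X => X < X0) (R := fun b => b = 0).
      * exists X0. auto.
      * reflexivity.
      * intros x y0 Hx Hy. simpl. subst y0. exists (RInt phi_std x 0). split.
        apply (RInt_correct (V:=R_CompleteNormedModule)). apply ex_RInt_phi.
        apply HP. unfold ball; simpl. unfold AbsRing_ball, abs, minus, plus, opp; simpl.
        assert (RInt phi_std x 0 <= l0). { apply Hub. exists x. split; auto; lra. }
        pose proof (Mono x X0 (Rlt_le _ _ Hx)).
        apply Rabs_def1; lra.
    + apply is_RInt_gen_at_point. apply (RInt_correct (V:=R_CompleteNormedModule)). apply ex_RInt_phi.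
  - intros y.
    set (c := RInt phi_std y (Rabs y + 1)).
    assert (Hc : 0 < c). { apply RInt_phi_gt0. pose proof (Rle_abs y); lra. }
    assert (l0 <= 1 - c - RInt phi_std 0 y).
    { apply Hlub. intros v [X [HX ->]].
      set (X' := Rmin X y).
      assert (RInt phi_std X 0 <= RInt phi_std X' 0) by (apply Mono; apply Rmin_l).
      pose proof (RInt_phi_lt1 X' (Rabs y + 1)).
      rewrite <- (Chas X' 0 (Rabs y + 1)), <- (Chas 0 y (Rabs y + 1)) in H0.
      fold c in H0. lra. }
    lra.
Qed.

Lemma Phi_props : (forall y, Phi y < 1) /\ (forall a b, a < b -> Phi a < Phi b) /\
  (forall c x, x <> 0 -> is_derive (fun z => 1 - Phi (c / z)) x (phi_std (c / x) * (c / (x * x)))).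
Proof.
  destruct Phi_struct as [l0 [Heq Hlt]].
  split; [|split].
  - intros y. rewrite Heq. apply Hlt.
  - intros a b Hab. rewrite !Heq. rewrite <- (Chas 0 a b). pose proof (RInt_phi_gt0 a b Hab). lra.
  - intros c x Hx.
    apply is_derive_ext with (f := fun z => 1 - (l0 + RInt phi_std 0 (c / z))).
    { intros z. rewrite Heq. reflexivity. }
    assert (Dg : is_derive (fun z : R => c / z) x (- c / (x * x))).
    { auto_derive. auto. field. auto. }
    assert (Df : is_derive (RInt phi_std 0) (c / x) (phi_std (c / x))).
    { apply is_derive_RInt with (If := RInt phi_std 0) (a := 0).
      apply filter_forall. intros b. apply (RInt_correct (V:=R_CompleteNormedModule)), ex_RInt_phi.
      apply phi_cont. }
    pose proof (is_derive_comp _ _ _ _ _ Df Dg) as Dc.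
    assert (Dk : is_derive (fun z => 1 - (l0 + RInt phi_std 0 (c / z))) x (0 - (0 + scal (- c / (x * x)) (phi_std (c / x))))).
    { apply (is_derive_minus (fun _ => 1) (fun z => l0 + RInt phi_std 0 (c / z))).
      apply (is_derive_const (K:=R_AbsRing) (V:=R_NormedModule)).
      apply (is_derive_plus (fun _ => l0) (fun z => RInt phi_std 0 (c / z))).
      apply (is_derive_const (K:=R_AbsRing) (V:=R_NormedModule)). exact Dc. }
    unfold scal in Dk; simpl in Dk; unfold mult in Dk; simpl in Dk.
    replace (phi_std (c / x) * (c / (x * x))) with (0 - (0 + - c / (x * x) * phi_std (c / x))).
    exact Dk. field. auto.
Qed.

Lemma Jp_abs (fA fB : R -> R) x dA dB lam :
  is_derive fA x dA -> is_derive fB x dB -> 0 < fB x -> 0 < fA x -> 0 < lam < 1 ->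
  is_derive (fun z => ln (fA z / (lam * fA z + (1 - lam) * fB z))) x
    ((1 - lam) * (dA * fB x - fA x * dB) / (fA x * (lam * fA x + (1 - lam) * fB x))).
Proof.
  intros HA HB PB PA Hl.
  assert (PD : 0 < lam * fA x + (1 - lam) * fB x) by nra.
  auto_derive.
  - repeat split; try (eexists; eassumption). lra.
    apply Rdiv_lt_0_compat; lra.
  - replace (Derive (fun x0 => fA x0) x) with dA by (symmetry; apply is_derive_unique; auto).
    replace (Derive (fun x0 => fB x0) x) with dB by (symmetry; apply is_derive_unique; auto).
    match goal with |- ?a = ?b => change (@eq R a b) end. field. lra.
Qed.

Section JM.
Variables (lam pi q : R).
Definition DD (A B : R) := lam * A + (1 - lam) * B.
Definition EE (A B : R) := pi * (lam * A + B) + q * (1 + lam).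
Definition PP (A B : R) := (A - B) * (pi * A + q).
Definition NN (A B : R) := DD A B * EE A B - lam ^ 2 * PP A B.
End JM.

Lemma NN_eq lam pi q A B : NN lam pi q A B =
  pi * B * (2 * lam * A + (1 - lam) * B) + q * (lam * A + B).
Proof. unfold NN, DD, EE, PP. ring. Qed.

Lemma Jm_abs (fA fB : R -> R) x dA dB lam pi q :
  is_derive fA x dA -> is_derive fB x dB -> 0 < fB x -> 0 < fA x -> 0 < lam < 1 ->
  0 < pi -> 0 < q ->
  is_derive (fun z => ln (1 - lam ^ 2 * (PP pi q (fA z) (fB z) /
                     (DD lam (fA z) (fB z) * EE lam pi q (fA z) (fB z))))) x
    (- lam ^ 2 *
     (((pi * fA x + q) * EE lam pi q (fA x) (fB x) * fB x
       + pi * (fA x - fB x) * DD lam (fA x) (fB x) * (pi * fB x + q)) * dA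
      + (- (pi * fA x + q) * DD lam (fA x) (fB x) * EE lam pi q (fA x) (fB x)
         - PP pi q (fA x) (fB x) * ((1 - lam) * EE lam pi q (fA x) (fB x)
                                     + pi * DD lam (fA x) (fB x))) * dB)
     / (DD lam (fA x) (fB x) * EE lam pi q (fA x) (fB x) * NN lam pi q (fA x) (fB x))).
Proof.
  intros HA HB PB PA Hl Hpi Hq.
  assert (PD : 0 < DD lam (fA x) (fB x)).
  { unfold DD. assert (0 < lam * fA x) by nra. assert (0 < (1 - lam) * fB x) by nra. lra. }
  assert (PE : 0 < EE lam pi q (fA x) (fB x)).
  { unfold EE. assert (0 < pi * (lam * fA x + fB x)) by (apply Rmult_lt_0_compat; nra).
    assert (0 < q * (1 + lam)) by nra. lra. }
  assert (PN : 0 < NN lam pi q (fA x) (fB x)).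
  { rewrite NN_eq. assert (0 < lam * fA x) by nra. assert (0 < (1 - lam) * fB x) by nra.
    assert (0 < pi * fB x * (2 * lam * fA x + (1 - lam) * fB x)).
    { apply Rmult_lt_0_compat. apply Rmult_lt_0_compat; lra. lra. }
    assert (0 < q * (lam * fA x + fB x)) by (apply Rmult_lt_0_compat; lra). lra. }
  unfold PP, DD, EE in *. unfold NN, PP, DD, EE in PN.
  auto_derive.
  repeat split; try (eexists; eassumption); try lra.
  apply Rgt_not_eq. apply Rmult_lt_0_compat; lra.
  match goal with |- 0 < ?e =>
    replace e with (((lam * fA x + (1 - lam) * fB x) * (pi * (lam * fA x + fB x) + q * (1 + lam)) -
       lam ^ 2 * ((fA x - fB x) * (pi * fA x + q))) / ((lam * fA x + (1 - lam) * fB x) * (pi * (lam * fA x + fB x) + q * (1 + lam)))) end.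
  apply Rdiv_lt_0_compat. lra. apply Rmult_lt_0_compat; lra.
  field. lra.
  replace (Derive (fun x0 => fA x0) x) with dA by (symmetry; apply is_derive_unique; auto).
  replace (Derive (fun x0 => fB x0) x) with dB by (symmetry; apply is_derive_unique; auto).
  revert PD PE PN. generalize (fA x) (fB x) dA dB. intros a b da db PD PE PN. unfold NN, PP, DD, EE. field. split; lra.
Qed.

Lemma div_neg a b : a < 0 -> 0 < b -> a / b < 0.
Proof. intros. unfold Rdiv. pose proof (Rinv_0_lt_compat b H0). nra. Qed.

Lemma div_pos a b : 0 < a -> 0 < b -> a / b > 0.
Proof. intros. unfold Rdiv. pose proof (Rinv_0_lt_compat b H0). nra. Qed.

Lemma Jm_ident lam pi p A B : 0 < lam < 1 -> 0 < pi < 1 -> 0 < p < 1 -> 0 < A -> 0 < B ->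
  let e := lam * (pi * A + (1 - pi) * p) / (pi * (lam * A + (1 - lam) * B) + (1 - pi) * p) in
  (1 - e * (lam * A / (lam * A + (1 - lam) * B))) / (1 - e * lam) =
  1 - lam ^ 2 * (PP pi ((1 - pi) * p) A B /
     (DD lam A B * EE lam pi ((1 - pi) * p) A B)).
Proof.
  intros Hl Hpi Hp HA HB e. unfold e, PP, DD, EE.
  assert (0 < lam * A) by nra. assert (0 < (1 - lam) * B) by nra.
  assert (0 < (1 - pi) * p) by nra.
  assert (0 < pi * (lam * A + (1 - lam) * B)) by (apply Rmult_lt_0_compat; lra).
  assert (0 < pi * (lam * A + B)) by (apply Rmult_lt_0_compat; nra).
  assert (0 < (1 - pi) * p * (1 + lam)) by nra.
  assert (0 < (1 - lam) * (pi * (lam * A + B)) ) by nra.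
  assert (0 < (1 - lam) * ((1 - pi) * p * (1 + lam))) by nra.
  field. repeat split; try lra. 
Qed.

Theorem lemmaD6 (mu0 mu1 pi lam p s sH : R) :
  mu0 < mu1 -> 0 < sH ->
  0 < pi < 1 -> 0 < lam < 1 -> 0 < p < 1 ->
  mu0 < s < mu1 ->
  (ex_derive (fun x => Jplus mu0 mu1 lam s x) sH /\
   Derive (fun x => Jplus mu0 mu1 lam s x) sH < 0) /\
  (ex_derive (fun x => Jminus mu0 mu1 pi lam p s x) sH /\
   Derive (fun x => Jminus mu0 mu1 pi lam p s x) sH > 0).
Proof.
  intros Hmu HsH Hpi Hl Hp Hs.
  destruct Phi_props as [Plt1 [Pmono Pder]].
  set (fA := fun z => Afun mu1 z s). set (fB := fun z => Bfun mu0 z s).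
  set (dA := phi_std ((s - mu1) / sH) * ((s - mu1) / (sH * sH))).
  set (dB := phi_std ((s - mu0) / sH) * ((s - mu0) / (sH * sH))).
  assert (HA : is_derive fA sH dA). { apply Pder. lra. }
  assert (HB : is_derive fB sH dB). { apply Pder. lra. }
  assert (PosA : forall z, 0 < fA z). { intros z. unfold fA, Afun. pose proof (Plt1 ((s - mu1) / z)). lra. }
  assert (PosB : forall z, 0 < fB z). { intros z. unfold fB, Bfun. pose proof (Plt1 ((s - mu0) / z)). lra. }
  assert (AB : fB sH < fA sH).
  { unfold fA, fB, Afun, Bfun. assert (Phi ((s - mu1) / sH) < Phi ((s - mu0) / sH)).
    { apply Pmono. unfold Rdiv. apply Rmult_lt_compat_r. apply Rinv_0_lt_compat; lra. lra. }
    lra. }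
  assert (NdA : dA < 0).
  { unfold dA. pose proof (phi_pos ((s - mu1) / sH)).
    assert ((s - mu1) / (sH * sH) < 0). { apply div_neg. lra. nra. } nra. }
  assert (PdB : 0 < dB).
  { unfold dB. pose proof (phi_pos ((s - mu0) / sH)).
    assert ((s - mu0) / (sH * sH) > 0). { apply div_pos. lra. nra. } nra. }
  pose proof (PosA sH) as PA. pose proof (PosB sH) as PB.
  split.
  - pose proof (Jp_abs fA fB sH dA dB lam HA HB PB PA Hl) as J.
    assert (J' : is_derive (fun x => Jplus mu0 mu1 lam s x) sH
       ((1 - lam) * (dA * fB sH - fA sH * dB) / (fA sH * (lam * fA sH + (1 - lam) * fB sH)))).
    { eapply is_derive_ext; [|exact J]. intros; reflexivity. }
    split. eexists; exact J'.
    assert (Der : Derive (fun x => Jplus mu0 mu1 lam s x) sH =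
       (1 - lam) * (dA * fB sH - fA sH * dB) / (fA sH * (lam * fA sH + (1 - lam) * fB sH)))
      by (apply is_derive_unique; exact J').
    rewrite Der.
    apply div_neg.
    + assert (dA * fB sH < 0) by nra. assert (0 < fA sH * dB) by nra. nra.
    + assert (0 < lam * fA sH + (1 - lam) * fB sH) by nra. nra.
  - set (q := (1 - pi) * p).
    assert (Hq : 0 < q) by (unfold q; nra).
    pose proof (Jm_abs fA fB sH dA dB lam pi q HA HB PB PA Hl (proj1 Hpi) Hq) as J.
    evar (Dm : R).
    assert (J' : is_derive (fun x => Jminus mu0 mu1 pi lam p s x) sH Dm).
    { eapply is_derive_ext; [|exact J]. intros z.
      symmetry. unfold Jminus, estar, pH, pL. f_equal. unfold q.
      exact (Jm_ident lam pi p (fA z) (fB z) Hl Hpi Hp (PosA z) (PosB z)). }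
    unfold Dm in J'.
    split. eexists; exact J'.
    match type of J' with is_derive _ _ ?v =>
      assert (Der : Derive (fun x => Jminus mu0 mu1 pi lam p s x) sH = v)
        by (apply is_derive_unique; exact J') end.
    rewrite Der.
    revert PA PB AB. generalize (fA sH) (fB sH). intros A B PA PB AB.
    assert (PD : 0 < DD lam A B).
    { unfold DD. assert (0 < lam * A) by nra. assert (0 < (1 - lam) * B) by nra. lra. }
    assert (PE : 0 < EE lam pi q A B).
    { unfold EE. assert (0 < pi * (lam * A + B)) by (apply Rmult_lt_0_compat; nra).
      assert (0 < q * (1 + lam)) by nra. lra. }
    assert (PN : 0 < NN lam pi q A B).
    { rewrite NN_eq. assert (0 < lam * A) by nra. assert (0 < (1 - lam) * B) by nra.
      assert (0 < pi * B * (2 * lam * A + (1 - lam) * B)).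
      { apply Rmult_lt_0_compat. apply Rmult_lt_0_compat; lra. lra. }
      assert (0 < q * (lam * A + B)) by (apply Rmult_lt_0_compat; lra). lra. }
    assert (Q1 : 0 < pi * A + q) by nra.
    assert (PPp : 0 < PP pi q A B) by (unfold PP; apply Rmult_lt_0_compat; lra).
    assert (KA : 0 < (pi * A + q) * EE lam pi q A B * B +
       pi * (A - B) * DD lam A B * (pi * B + q)).
    { assert (0 < (pi * A + q) * EE lam pi q A B * B).
      { apply Rmult_lt_0_compat; [apply Rmult_lt_0_compat|]; lra. }
      assert (0 < pi * (A - B) * DD lam A B * (pi * B + q)).
      { repeat apply Rmult_lt_0_compat; try lra. nra. }
      lra. }
    assert (KB : - (pi * A + q) * DD lam A B * EE lam pi q A B -
       PP pi q A B * ((1 - lam) * EE lam pi q A B + pi * DD lam A B) < 0).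
    { assert (0 < (pi * A + q) * DD lam A B * EE lam pi q A B).
      { repeat apply Rmult_lt_0_compat; lra. }
      assert (0 < (1 - lam) * EE lam pi q A B + pi * DD lam A B).
      { assert (0 < (1 - lam) * EE lam pi q A B) by (apply Rmult_lt_0_compat; lra).
        assert (0 < pi * DD lam A B) by (apply Rmult_lt_0_compat; lra). lra. }
      assert (0 < PP pi q A B * ((1 - lam) * EE lam pi q A B + pi * DD lam A B))
        by (apply Rmult_lt_0_compat; lra).
      lra. }
    apply div_pos.
    + set (kA := (pi * A + q) * EE lam pi q A B * B +
         pi * (A - B) * DD lam A B * (pi * B + q)) in *.
      set (kB := - (pi * A + q) * DD lam A B * EE lam pi q A B -
         PP pi q A B * ((1 - lam) * EE lam pi q A B + pi * DD lam A B)) in *.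
      assert (kA * dA < 0) by nra. assert (kB * dB < 0) by nra.
      assert (0 < lam ^ 2) by (apply pow_lt; lra). nra.
    + repeat apply Rmult_lt_0_compat; lra.
Qed.
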